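(* Let $\Delta$ be a simplicial complex on $[n]$ with facets $F_1,\ldots,F_t$. Then $\Delta$ is a quasi-tree if and only if the matrix $M_\Delta$ contains a $(t-1)\times t$ submatrix $M^\sharp_\Delta$ (formed by $t-1$ of its rows) with the property that, for each $1\leq j\leq t$, the $(t-1)\times(t-1)$ matrix $M^\sharp_\Delta(j)$ obtained by deleting the $j$th column of $M^\sharp_\Delta$ satisfies $\det(M^\sharp_\Delta(j))=\pm\, x_{[n]}/x_{F_j}$.
   Context: $S=K[x_1,\ldots,x_n]$, $x_F=\prod_{i\in F}x_i$. A simplicial complex on $[n]$ is a collection of subsets of $[n]$ containing all singletons and closed under taking subsets; facets are maximal faces. $M_\Delta$ is the $\binom t2\times t$ matrix over $S$ with rows indexed by pairs $(i,j)$, $1\le i<j\le t$, and columns by $k\in[t]$, whose entries are $a^{(i,j)}_i=x_{F_i\setminus F_j}$, $a^{(i,j)}_j=x_{F_j\setminus F_i}$, and $a^{(i,j)}_k=0$ for $k\notin\{i,j\}$. A facet $F$ is a leaf if either it is the only facet, or there is a facet $G\neq F$ with $H\cap F\subseteq G\cap F$ for every facet $H\neq F$. $\Delta$ is a quasi-tree if its facets can be labeled so that, in this labeling $G_1,\ldots,G_m$, each $G_i$ is a leaf of the complex generated by $G_1,\ldots,G_i$. *)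

(* Defs.v *)
From HB Require Import structures.
From mathcomp Require Import all_boot all_order all_algebra.
From mathcomp Require Import all_fingroup.
From mathcomp Require Import mpoly.
Set Implicit Arguments. Unset Strict Implicit. Unset Printing Implicit Defensive.
Import GRing.Theory.
Local Open Scope ring_scope.

Definition xmon (K : fieldType) (n : nat) (F : {set 'I_n}) : {mpoly K[n]} :=
  \prod_(i in F) 'X_i.

(* A family F : 'I_t -> {set 'I_n} is the (labeled) list of facets of a
   simplicial complex on [n]: facets pairwise incomparable (hence distinct,
   all maximal), every vertex lies in some facet (singletons are faces),
   and there is at least one facet (the empty set is always a face). *)
Definition facet_family (n t : nat) (F : 'I_t -> {set 'I_n}) : Prop :=
  [/\ (0 < t)%N,
      (forall i j : 'I_t, i != j -> ~~ (F i \subset F j)) &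
      (forall v : 'I_n, exists i : 'I_t, v \in F i)].

Definition is_leaf (n t : nat) (F : 'I_t -> {set 'I_n}) (A : {set 'I_t})
    (i : 'I_t) : Prop :=
  A = [set i] \/
  exists2 g : 'I_t, (g \in A) && (g != i) &
    forall h : 'I_t, h \in A -> h != i -> F h :&: F i \subset F g :&: F i.

Definition quasi_tree (n t : nat) (F : 'I_t -> {set 'I_n}) : Prop :=
  exists s : {perm 'I_t},
    forall k : 'I_t, is_leaf F [set s j | j in [set j : 'I_t | (j <= k)%N]] (s k).

Definition pair_idx (t : nat) : finType := sig (fun p : 'I_t * 'I_t => (p.1 < p.2)%N).

Definition Mentry (K : fieldType) (n t : nat) (F : 'I_t -> {set 'I_n})
    (p : 'I_t * 'I_t) (k : 'I_t) : {mpoly K[n]} :=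
  if k == p.1 then xmon K (F p.1 :\: F p.2)
  else if k == p.2 then xmon K (F p.2 :\: F p.1)
  else 0.

(* The binom(t,2) x t matrix M_Delta (rows enumerated by the finType of
   pairs i<j; the row order is irrelevant for the statement). *)
Definition MDelta (K : fieldType) (n t : nat) (F : 'I_t -> {set 'I_n})
  : 'M[{mpoly K[n]}]_(#|[set: pair_idx t]|, t) :=
  \matrix_(r < #|[set: pair_idx t]|, k < t) Mentry K F (val (enum_val r)) k.

(* Main.v *)
Require Import Defs.
From HB Require Import structures.
From mathcomp Require Import all_boot all_order all_algebra.
From mathcomp Require Import all_fingroup.
From mathcomp Require Import mpoly.
From mathcomp Require Import zify.
Set Implicit Arguments. Unset Strict Implicit. Unset Printing Implicit Defensive.
Import GRing.Theory.
Lemma leaf_transport a b n (f : 'I_a -> 'I_b) (finj : injective f)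
  (F : 'I_b -> {set 'I_n}) (A : {set 'I_a}) i :
  is_leaf F (f @: A) (f i) <-> is_leaf (fun k => F (f k)) A i.
Proof.
split.
- case=> [h|[g /andP[gA gi] H]]; [left|right].
    apply/setP=> x; move/setP: h => /(_ (f x)).
    by rewrite mem_imset // !inE (inj_eq finj).
  case/imsetP: gA => g' g'A eg; exists g'.
    by rewrite g'A -(inj_eq finj) -eg gi.
  move=> h hA hi; rewrite -eg; apply: H; first exact: imset_f.
  by rewrite (inj_eq finj).
- case=> [->|[g /andP[gA gi] H]]; [left|right].
    by rewrite imset_set1.
  exists (f g); first by rewrite mem_imset // (inj_eq finj) gA gi.
  move=> h /imsetP[h' h'A ->]; rewrite (inj_eq finj) => hi; exact: H.
Qed.

Definition leafc n t (F : 'I_t -> {set 'I_n}) c b :=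
  b != c /\ forall h, h != c -> F h :&: F c \subset F b.

Lemma set_le_lift m (k' : 'I_m.+1) :
  [set j : 'I_m.+2 | (j <= k')%N] = lift ord_max @: [set j : 'I_m.+1 | (j <= k')%N].
Proof.
apply/setP=> x; rewrite inE; case: (unliftP ord_max x) => [x' ->|->].
  by rewrite mem_imset ?inE ?lift_max //; exact: lift_inj.
have -> : ((@ord_max m.+1) <= k')%N = false by apply/negbTE; rewrite -ltnNge; exact: ltn_ord.
apply/esym/negP => /imsetP[y _ /(congr1 val)] /=.
rewrite /bump leqNgt ltn_ord add0n => e; have := ltn_ord y; by rewrite -e ltnn.
Qed.

Lemma setT_le_max m : [set j : 'I_m.+1 | (j <= (@ord_max m))%N] = setT.
Proof. apply/setP=> x; rewrite !inE; by rewrite -ltnS ltn_ord. Qed.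

Lemma imset_permT m (s : {perm 'I_m}) : s @: setT = setT.
Proof.
apply/setP=> x; rewrite inE; apply/imsetP; exists ((s^-1)%g x); by rewrite ?inE ?permKV.
Qed.

Lemma Q0 n (F : 'I_1 -> {set 'I_n}) : quasi_tree F.
Proof.
exists 1%g => k; left; apply/setP=> x; rewrite !inE.
have -> : x = k by rewrite !ord1.
rewrite perm1 eqxx; apply/imsetP; exists k; by rewrite ?inE ?perm1.
Qed.

Lemma Q2 n m (F : 'I_m.+2 -> {set 'I_n}) c b :
  leafc F c b -> quasi_tree (fun k => F (lift c k)) -> quasi_tree F.
Proof.
move=> [bc Hl] [s' Hs']; exists (lift_perm ord_max c s') => k.
case: (unliftP ord_max k) => [k' ->|->].
  rewrite lift_perm_lift.
  have -> : [set j : 'I_m.+2 | (j <= lift ord_max k')%N] = [set j : 'I_m.+2 | (j <= k')%N].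
    by apply/setP=> x; rewrite !inE lift_max.
  rewrite set_le_lift -imset_comp.
  rewrite (eq_imset _ (lift_perm_lift ord_max c s')) imset_comp.
  apply/leaf_transport; [exact: lift_inj| exact: Hs'].
rewrite setT_le_max imset_permT lift_perm_id; right; exists b.
  by rewrite inE bc.
move=> h _ hc; rewrite subsetI subsetIr andbT; exact: Hl.
Qed.

Lemma Q1 n m (F : 'I_m.+2 -> {set 'I_n}) :
  quasi_tree F -> exists c b, leafc F c b /\ quasi_tree (fun k => F (lift c k)).
Proof.
move=> [s Hs]; set c := s ord_max.
have := Hs ord_max; rewrite setT_le_max imset_permT -/c.
case=> [hT|[b /andP[_ bc] Hb]].
  have : lift c ord0 \in [set c] by rewrite -hT inE.
  by rewrite inE eq_sym (negbTE (neq_lift _ _)).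
exists c, b; split.
  split=> // h hc; have := Hb h (in_setT _) hc; rewrite subsetI => /andP[] //.
pose f k := odflt ord0 (unlift c (s (lift ord_max k))).
have Hf k : lift c (f k) = s (lift ord_max k).
  rewrite /f; case: (unliftP c (s (lift ord_max k))) => [x -> //|].
  by move/perm_inj/eqP; rewrite eq_sym (negbTE (neq_lift _ _)).
have finj : injective f.
  by move=> x y /(congr1 (lift c)); rewrite !Hf => /perm_inj/lift_inj.
exists (perm finj) => k'.
apply/(leaf_transport (@lift_inj _ c)).
have -> : lift c (perm finj k') = s (lift ord_max k') by rewrite permE Hf.
have E1 : (lift c \o perm finj) =1 (s \o lift ord_max) by move=> k /=; rewrite permE Hf.
rewrite -imset_comp (eq_imset _ E1) imset_comp -set_le_lift.
have -> : [set j : 'I_m.+2 | (j <= k')%N] = [set j : 'I_m.+2 | (j <= lift ord_max k')%N].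
  by apply/setP=> x; rewrite !inE lift_max.
exact: Hs.
Qed.
Local Open Scope ring_scope.
Section Mono.
Variables (K : fieldType) (n : nat).

Definition pm (x y : {mpoly K[n]}) := y = x \/ y = - x.

Lemma pmM x y x' y' : pm x y -> pm x' y' -> pm (x * x') (y * y').
Proof.
by case=> ->; case=> ->; rewrite ?mulrN ?mulNr ?opprK; [left|right|right|left].
Qed.

Lemma pm_sym x y : pm x y -> pm y x.
Proof. by case=> ->; [left|right; rewrite opprK]. Qed.

Lemma pmN x y : pm x y -> pm x (- y).
Proof. by case=> ->; [right|left; rewrite opprK]. Qed.

Lemma pm_refl x : pm x x. Proof. by left. Qed.

Lemma meval_xmon (w : 'I_n -> K) (S : {set 'I_n}) :
  meval w (xmon K S) = \prod_(i in S) w i.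
Proof.
rewrite /xmon rmorph_prod; apply: eq_bigr => i _; exact: mevalXU.
Qed.

Lemma xmon_neq0 (S : {set 'I_n}) : xmon K S != 0.
Proof.
apply/negP=> /eqP h.
have := congr1 (meval (fun _ => 1)) h.
rewrite meval_xmon meval0 big1 //; exact/eqP/oner_neq0.
Qed.

Lemma xmonU (A B : {set 'I_n}) : [disjoint A & B] ->
  xmon K (A :|: B) = xmon K A * xmon K B.
Proof.
move=> d; rewrite /xmon -(bigU (mem A) (mem B) (fun i => 'X_i) d); apply: eq_bigl => i; by rewrite !inE.
Qed.

Lemma pm_sub (S T : {set 'I_n}) P : pm (xmon K T) (xmon K S * P) -> S \subset T.
Proof.
move=> h; apply/subsetP=> v vS; apply/negPn/negP=> vT.
pose w := fun i : 'I_n => (i \in T)%:R : K.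
have e1 : meval w (xmon K T) = 1.
  rewrite meval_xmon big1 // => i iT; by rewrite /w iT.
have e2 : meval w (xmon K S) = 0.
  rewrite meval_xmon (bigD1 v) //= /w (negbTE vT) mul0r //.
case: h => h; have := congr1 (meval w) h;
  rewrite ?mevalN mevalM e1 e2 mul0r => /esym/eqP; by rewrite ?oppr_eq0 oner_eq0.
Qed.

Lemma pm_cancel (S T : {set 'I_n}) P : [disjoint S & T] ->
  pm (xmon K (S :|: T)) (xmon K S * P) -> pm (xmon K T) P.
Proof.
move=> d; rewrite xmonU //; have nz := xmon_neq0 S.
case=> h; [left|right]; apply: (mulfI nz); rewrite h //; by rewrite mulrN.
Qed.

End Mono.
Lemma bump_comm (c j' c'' k : nat) :
  bump (bump c j') c'' = c -> bump (bump c j') (bump c'' k) = bump c (bump j' k).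
Proof. rewrite /bump. case: (leqP c j'); case: (leqP j' k); case (leqP c'' k); simpl; intros; lia. Qed.

Lemma lift_comm N (c : 'I_N.+2) (j' c'' : 'I_N.+1) (k : 'I_N) :
  lift (lift c j') c'' = c -> lift (lift c j') (lift c'' k) = lift c (lift j' k).
Proof.
move=> /(congr1 val) /= h; apply: val_inj => /=; exact: bump_comm.
Qed.

Lemma sign_pm (R : comRingType) (a : nat) : (-1) ^+ a = 1 :> R \/ (-1) ^+ a = -1 :> R.
Proof. rewrite -signr_odd; case: (odd a); [right|left]; by rewrite ?expr1 ?expr0. Qed.

Lemma peel1 (R : comRingType) m (N : 'M[R]_(m.+1, m.+2)) e c j' :
 (forall e', e' != e -> N e' c = 0) ->
 exists2 s : R, (s = 1 \/ s = -1) &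
   \det (col' (lift c j') N) = s * N e c * \det (col' j' (row' e (col' c N))).
Proof.
move=> Hz; set j := lift c j'.
have [c'' Hc] : exists c'', lift j c'' = c.
  case: (unliftP j c) => [c'' ->|ec]; first by exists c''.
  by move: (neq_lift c j'); rewrite -/j ec eqxx.
rewrite (expand_det_col _ c'') (bigD1 e) //= big1 ?addr0; last first.
  by move=> i ie; rewrite mxE Hc Hz // mul0r.
rewrite mxE Hc /cofactor; exists ((-1) ^+ (e + c'')); first exact: sign_pm.
rewrite mulrCA mulrA; congr (_ * _ * \det _).
apply/matrixP=> a b; rewrite !mxE; congr (N _ _); exact: lift_comm.
Qed.

Lemma peel2 (R : comRingType) m (N : 'M[R]_(m.+1, m.+2)) e c b' :
 (forall k, k != c -> k != lift c b' -> N e k = 0) ->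
 exists2 s : R, (s = 1 \/ s = -1) &
   \det (col' c N) = s * N e (lift c b') * \det (col' b' (row' e (col' c N))).
Proof.
move=> Hz.
rewrite (expand_det_row _ e) (bigD1 b') //= big1 ?addr0; last first.
  move=> i ib; rewrite mxE Hz ?mul0r //; first by rewrite eq_sym neq_lift.
  by rewrite (inj_eq (@lift_inj _ c)).
rewrite mxE /cofactor; exists ((-1) ^+ (e + b')); first exact: sign_pm.
rewrite mulrCA mulrA; congr (_ * \det _); apply/matrixP=> x y; by rewrite !mxE.
Qed.

Definition Ucov n t (F : 'I_t -> {set 'I_n}) := \bigcup_(i < t) F i.

Lemma memU n t (F : 'I_t -> {set 'I_n}) v : (v \in Ucov F) = [exists i, v \in F i].
Proof. by apply/bigcupP/existsP => [[i _ h]|[i h]]; exists i. Qed.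

Lemma nlift N (c : 'I_N) h : lift c h != c.
Proof. by rewrite eq_sym neq_lift. Qed.

Section SetDec.
Variables (n m : nat) (F : 'I_m.+2 -> {set 'I_n}) (c b : 'I_m.+2).
Hypothesis Hl : leafc F c b.
Let F' := fun k => F (lift c k).

Lemma setdec1 h' :
  Ucov F :\: F (lift c h') = (F c :\: F b) :|: (Ucov F' :\: F' h') /\
  [disjoint F c :\: F b & Ucov F' :\: F' h'].
Proof.
case: Hl => bc HL.
have HL' v h : h != c -> v \in F h -> v \in F c -> v \in F b.
  by move=> hc vh vc; apply: (subsetP (HL h hc)); rewrite inE vh vc.
have [b' eb] : exists b', b = lift c b'.
  by case: (unliftP c b) => [b' ->|eb]; [exists b'|move: bc; rewrite eb eqxx].
split.
  apply/setP=> v; rewrite !inE !memU /F'; apply/andP/orP.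
    case=> vh /existsP[i vi].
    case: (unliftP c i) vi => [i' ->|->] vi.
      by right; rewrite vh; apply/existsP; exists i'.
    case vb: (v \in F b); last by left; rewrite vi.
    by right; rewrite vh; apply/existsP; exists b'; rewrite -eb.
  case=> [/andP[vb vc]|/andP[vh /existsP[i vi]]].
    split; last by apply/existsP; exists c.
    apply/negP=> vh; move: (HL' v _ (nlift c h') vh vc); by rewrite (negbTE vb).
  by split=> //; apply/existsP; exists (lift c i).
rewrite -setI_eq0; apply/eqP/setP=> v; rewrite !inE memU /F'.
apply/negP=> /and3P[/andP[vb vc] _ /existsP[i vi]].
by move: (HL' v _ (nlift c i) vi vc); rewrite (negbTE vb).
Qed.

Lemma setdec2 :
  Ucov F :\: F c = (F b :\: F c) :|: (Ucov F' :\: F b) /\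
  [disjoint F b :\: F c & Ucov F' :\: F b].
Proof.
case: Hl => bc HL.
have HL' v h : h != c -> v \in F h -> v \in F c -> v \in F b.
  by move=> hc vh vc; apply: (subsetP (HL h hc)); rewrite inE vh vc.
have [b' eb] : exists b', b = lift c b'.
  by case: (unliftP c b) => [b' ->|eb]; [exists b'|move: bc; rewrite eb eqxx].
split.
  apply/setP=> v; rewrite !inE !memU /F'; apply/andP/orP.
    case=> vc /existsP[i vi].
    case: (unliftP c i) vi => [i' ->|->] vi; last by rewrite vi in vc.
    case vb: (v \in F b); first by left; rewrite vc.
    by right => /=; apply/existsP; exists i'.
  case=> [/andP[vb vc]|/andP[vb /existsP[i vi]]].
    by split=> //; apply/existsP; exists b.
  split; last by apply/existsP; exists (lift c i).
  apply/negP=> vc; move: (HL' v _ (nlift c i) vi vc); by rewrite (negbTE vb).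
rewrite -setI_eq0; apply/eqP/setP=> v; rewrite !inE.
by case: (v \in F b); rewrite ?andbF.
Qed.

End SetDec.

Section MentryLemmas.
Variables (K : fieldType) (n t : nat) (F : 'I_t -> {set 'I_n}).

Lemma Mentry_sym (p : 'I_t * 'I_t) : p.1 != p.2 -> Mentry K F (p.2, p.1) =1 Mentry K F p.
Proof.
case: p => a b /= ab k; rewrite /Mentry /=.
case: (eqVneq k a) => [->|ka]; first by rewrite (negbTE ab).
by case: (eqVneq k b).
Qed.

Lemma Mentry_fst a b : Mentry K F (a, b) a = xmon K (F a :\: F b).
Proof. by rewrite /Mentry /= eqxx. Qed.

Lemma Mentry_snd a b : a != b -> Mentry K F (a, b) b = xmon K (F b :\: F a).
Proof. by move=> ab; rewrite /Mentry /= eq_sym (negbTE ab) eqxx. Qed.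

Lemma Mentry_out p k : k != p.1 -> k != p.2 -> Mentry K F p k = 0.
Proof. by move=> h1 h2; rewrite /Mentry (negbTE h1) (negbTE h2). Qed.

Lemma Mentry_eq0 p k : (Mentry K F p k == 0) = (k != p.1) && (k != p.2).
Proof.
rewrite /Mentry; case: (eqVneq k p.1) => _; first by rewrite (negbTE (xmon_neq0 _ _)).
by case: (eqVneq k p.2) => _; rewrite ?eqxx // (negbTE (xmon_neq0 _ _)).
Qed.

End MentryLemmas.

Lemma Mentry_lift (K : fieldType) n m (F : 'I_m.+2 -> {set 'I_n}) (c : 'I_m.+2) (a b k : 'I_m.+1) :
  Mentry K F (lift c a, lift c b) (lift c k) = Mentry K (fun i => F (lift c i)) (a, b) k.
Proof. by rewrite /Mentry /= !(inj_eq (@lift_inj _ c)). Qed.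

Definition edgeM (K : fieldType) n m (F : 'I_m.+1 -> {set 'I_n}) (E : 'I_m -> 'I_m.+1 * 'I_m.+1)
  : 'M[{mpoly K[n]}]_(m, m.+1) := \matrix_(e, k) Mentry K F (E e) k.

Definition inc m (E : 'I_m -> 'I_m.+1 * 'I_m.+1) e c := (c == (E e).1) || (c == (E e).2).

Lemma sum_inc2 N (a b : 'I_N) : a != b -> (\sum_c ((c == a) || (c == b)) = 2)%N.
Proof.
move=> ab; rewrite (bigD1 a) //= eqxx /= (bigD1 b) /=; last by rewrite eq_sym.
rewrite eqxx orbT big1 // => i /andP[ia ib]; by rewrite (negbTE ia) (negbTE ib).
Qed.

Lemma count_leaf m (E : 'I_m.+1 -> 'I_m.+2 * 'I_m.+2) :
  (forall e, (E e).1 != (E e).2) -> exists c, (\sum_e inc E e c <= 1)%N.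
Proof.
move=> HE; have [c Hc|H] := pickP (fun c => (\sum_e inc E e c <= 1)%N).
  by exists c.
exfalso.
have H1 : (\sum_(c < m.+2) 2 <= \sum_c \sum_e inc E e c)%N.
  apply: leq_sum => c _; move: (H c) => /= /negbT; by rewrite -ltnNge.
rewrite exchange_big /= in H1.
have H2 : (\sum_e \sum_c inc E e c = \sum_(e < m.+1) 2)%N.
  by apply: eq_bigr => e _; rewrite /inc sum_inc2.
rewrite H2 !sum_nat_const !card_ord in H1; lia.
Qed.

Lemma analysis (K : fieldType) n m : forall (F : 'I_m.+1 -> {set 'I_n})
  (E : 'I_m -> 'I_m.+1 * 'I_m.+1),
  (forall e, (E e).1 != (E e).2) ->
  (forall j, pm (xmon K (Ucov F :\: F j)) (\det (col' j (edgeM K F E)))) ->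
  quasi_tree F.
Proof.
elim: m => [|m IH] F E HE Hd; first exact: Q0.
have [c Hc] := count_leaf HE.
set N := edgeM K F E.
have NE e k : N e k = Mentry K F (E e) k by rewrite mxE.
have Nc0 e : ~~ inc E e c -> N e c = 0.
  by move=> h; rewrite NE; apply/eqP; rewrite Mentry_eq0 -negb_or.
case: (pickP (fun e => inc E e c)) => [e ie|none]; last first.
  have [s _ hs] := @peel1 _ _ N ord0 c ord0 (fun e' _ => Nc0 e' (negbT (none e'))).
  move: (Hd (lift c ord0)); rewrite hs Nc0 ?none // mulr0 mul0r.
  by case=> /eqP; rewrite eq_sym ?oppr_eq0 (negbTE (xmon_neq0 _ _)).
have uniq e' : e' != e -> ~~ inc E e' c.
  move=> e'e; apply/negP => ie'; move: Hc.
  by rewrite (bigD1 e) //= ie (bigD1 e') //= ie'.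
have Nc0' e' : e' != e -> N e' c = 0 by move=> h; apply: Nc0; exact: uniq.
set b := if c == (E e).1 then (E e).2 else (E e).1.
have [bc Erow] : b != c /\ Mentry K F (E e) =1 Mentry K F (c, b).
  move: (HE e) ie; rewrite /inc /b; case: (E e) => a1 a2 /= a12 /orP[/eqP->|/eqP->].
    by rewrite eqxx eq_sym.
  have -> : (a2 == a1) = false by rewrite eq_sym (negbTE a12).
  split; first exact: a12.
  move=> k; symmetry; exact: (Mentry_sym K F (p:=(a1,a2)) a12 k).
have Nec : N e c = xmon K (F c :\: F b) by rewrite NE Erow Mentry_fst.
have HL : leafc F c b.
  split=> // h hc; case: (unliftP c h) hc => [h' ->|->]; last by rewrite eqxx.
  move=> _; have [s s1 hs] := @peel1 _ _ N e c h' Nc0'.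
  move: (Hd (lift c h')); rewrite hs Nec (mulrC s) -mulrA => /pm_sub sub.
  apply/subsetP => v; rewrite inE => /andP[vh vc]; apply/negPn/negP => vb.
  have : v \in F c :\: F b by rewrite inE vb vc.
  by move/(subsetP sub); rewrite inE vh.
pose unl (x : 'I_m.+2) : 'I_m.+1 := odflt ord0 (unlift c x).
have unlK x : x != c -> lift c (unl x) = x.
  by rewrite /unl; case: (unliftP c x) => [y ->|->] //; rewrite eqxx.
have [ne1 ne2] : (forall e', (E (lift e e')).1 != c) /\ (forall e', (E (lift e e')).2 != c).
  split=> e'; move: (uniq (lift e e') (nlift _ _)); rewrite /inc negb_or
     => /andP[h1 h2]; by rewrite eq_sym.
pose E' e' := (unl (E (lift e e')).1, unl (E (lift e e')).2).
have HE' e' : (E' e').1 != (E' e').2.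
  by rewrite -(inj_eq (@lift_inj _ c)) /= !unlK.
have N'E : row' e (col' c N) = edgeM K (fun i => F (lift c i)) E'.
  apply/matrixP => i k; rewrite !mxE -Mentry_lift /E' /= !unlK //.
apply: (Q2 HL); apply: (IH _ E' HE') => j'.
have [s s1 hs] := @peel1 _ _ N e c j' Nc0'.
move: (Hd (lift c j')); rewrite hs Nec -N'E.
have [-> dis] := setdec1 HL j'.
rewrite (mulrC s) -mulrA => /(pm_cancel dis).
by case: s1 => ->; rewrite ?mul1r ?mulN1r // => /pmN; rewrite opprK.
Qed.

Lemma ltn_lift N (c : 'I_N.+1) (x y : 'I_N) : (lift c x < lift c y)%N = (x < y)%N.
Proof. by rewrite /= !ltnNge leq_bump2. Qed.

Lemma synthesis (K : fieldType) n m : forall (F : 'I_m.+1 -> {set 'I_n}),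
  quasi_tree F ->
  exists E : 'I_m -> 'I_m.+1 * 'I_m.+1,
   [/\ forall e, ((E e).1 < (E e).2)%N, injective E &
       forall j, pm (xmon K (Ucov F :\: F j)) (\det (col' j (edgeM K F E)))].
Proof.
elim: m => [|m IH] F QF.
  exists (fun _ => (ord0, ord0)); split; [by case| by case | ].
  move=> j; rewrite det_mx00.
  have -> : Ucov F :\: F j = set0.
    apply/setP => v; rewrite !inE memU; apply/negbTE; apply/negP => /andP[vj /existsP[i]].
    by rewrite (ord1 i) -(ord1 j) (negbTE vj).
  rewrite /xmon big_set0; exact: pm_refl.
have [c [b [HL QF']]] := Q1 QF.
have [E' [Elt Einj Hd]] := IH _ QF'.
have [bc HLl] := HL.
have [b' eb] : exists b', b = lift c b'.
  by case: (unliftP c b) => [b'' ->|eb]; [exists b''|move: bc; rewrite eb eqxx].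
pose E (e : 'I_m.+1) := match unlift ord_max e with
  | Some e' => (lift c (E' e').1, lift c (E' e').2)
  | None => if (b < c)%N then (b, c) else (c, b) end.
have ElO : E ord_max = if (b < c)%N then (b, c) else (c, b) by rewrite /E unlift_none.
have ElL e' : E (lift ord_max e') = (lift c (E' e').1, lift c (E' e').2) by rewrite /E liftK.
exists E; split.
- move=> e; case: (unliftP ord_max e) => [e' ->|->]; rewrite ?ElL ?ElO /=.
    by rewrite ltn_lift.
  case: (ltnP b c) => h //=; rewrite ltn_neqAle h andbT.
  by apply: contra bc => /eqP h'; apply/eqP/val_inj.
- move=> e1 e2; case: (unliftP ord_max e1) => [e1' ->|->];
    case: (unliftP ord_max e2) => [e2' ->|->]; rewrite ?ElL ?ElO //.
  + move=> H; have /= /lift_inj h1 := congr1 fst H; have /= /lift_inj h2 := congr1 snd H; congr lift; apply: Einj.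
    by rewrite [E' e1']surjective_pairing h1 h2 -surjective_pairing.
  + case: ltnP => _ H; [have /= := congr1 snd H | have /= := congr1 fst H];
      move/eqP; by rewrite (negbTE (nlift _ _)).
  + case: ltnP => _ /esym H; [have /= := congr1 snd H | have /= := congr1 fst H];
      move/eqP; by rewrite (negbTE (nlift _ _)).
set N := edgeM K F E.
have NE e k : N e k = Mentry K F (E e) k by rewrite mxE.
have Erow : Mentry K F (E ord_max) =1 Mentry K F (c, b).
  rewrite ElO; case: ltnP => _ // k.
  by apply: (Mentry_sym K F (p:=(c,b))); rewrite eq_sym.
have Nc0' e' : e' != ord_max -> N e' c = 0.
  case: (unliftP ord_max e') => [e'' ->|->]; last by rewrite eqxx.
  by move=> _; rewrite NE ElL Mentry_out //= neq_lift.
have Nec : N ord_max c = xmon K (F c :\: F b) by rewrite NE Erow Mentry_fst.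
have Neb : N ord_max b = xmon K (F b :\: F c).
  by rewrite NE Erow Mentry_snd // eq_sym.
have N'E : row' ord_max (col' c N) = edgeM K (fun i => F (lift c i)) E'.
  apply/matrixP=> i k; rewrite !mxE ElL Mentry_lift; by case: (E' i).
move=> j; case: (unliftP c j) => [j' ->|->].
  have [s s1 hs] := @peel1 _ _ N ord_max c j' Nc0'.
  rewrite hs Nec N'E; have [-> dis] := setdec1 HL j'.
  rewrite xmonU // (mulrC s) -mulrA; apply: pmM; first exact: pm_refl.
  by case: s1 => ->; rewrite ?mul1r ?mulN1r; [exact: Hd|exact/pmN/Hd].
have Hz k : k != c -> k != lift c b' -> N ord_max k = 0.
  move=> h1; rewrite -eb => h2; by rewrite NE Erow Mentry_out.
have [s s1 hs] := @peel2 _ _ N ord_max c b' Hz.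
rewrite hs -eb Neb N'E; have [-> dis] := setdec2 HL.
rewrite xmonU // (mulrC s) -mulrA; apply: pmM; first exact: pm_refl.
have := Hd b'; rewrite /= -eb => Hb.
by case: s1 => ->; rewrite ?mul1r ?mulN1r; [exact: Hb|exact/pmN/Hb].
Qed.

Unset Implicit Arguments.
Theorem lemma2p1 (K : fieldType) (n t : nat) (F : 'I_t -> {set 'I_n}) :
  facet_family F ->
  (quasi_tree F <->
   exists r : 'I_t.-1 -> 'I_#|[set: pair_idx t]|,
     injective r /\
     forall j : 'I_t,
       let Msharp := rowsub r (MDelta K F) in
       \det (col' j Msharp) = xmon K (setT :\: F j) \/
       \det (col' j Msharp) = - xmon K (setT :\: F j)).
Proof.
case=> t0 _ Hcov; case: t F t0 Hcov => [//|m] F _ Hcov.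
have UT : Ucov F = setT.
  apply/setP=> v; rewrite inE memU; apply/existsP; exact: Hcov v.
split.
- move/(synthesis K) => [E [Elt Einj Hd]].
  pose x (e : 'I_m) : pair_idx m.+1 := exist _ (E e) (Elt e).
  have xA e : x e \in [set: pair_idx m.+1] by rewrite inE.
  pose r e := enum_rank_in (xA e) (x e).
  have rK e : enum_val (r e) = x e by rewrite /r enum_rankK_in.
  exists r; split.
    move=> e1 e2 h; have := congr1 enum_val h; rewrite !rK => /(congr1 val) /=.
    exact: Einj.
  move=> j /=.
  have -> : rowsub r (MDelta K F) = edgeM K F E.
    by apply/matrixP=> i k; rewrite !mxE rK.
  by have := Hd j; rewrite UT.
- case=> r [rinj Hd].
  pose E (e : 'I_m) := val (enum_val (r e)).
  apply: (analysis (K:=K) (E:=E)).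
    move=> e; rewrite /E; by rewrite neq_ltn (valP (enum_val (r e))).
  move=> j; rewrite UT.
  have <- : rowsub r (MDelta K F) = edgeM K F E.
    by apply/matrixP=> i k; rewrite !mxE.
  exact: Hd j.
Qed.
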